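(* Let $B_1,B_2$ be independent standard Brownian motions, $c_1,c_2\in\mathbb R$, $\gamma_1,\gamma_2\in[0,2)$, $a\le 1$. For $\varepsilon\in(0,1)$ let $A_\varepsilon=\{(t,s_1,s_2)\in[0,1]^3:\max(s_1,s_2)\le t\le\varepsilon\}$. Then for every $\delta>0$ there exists $\varepsilon=\varepsilon(\delta)\in(0,1)$ such that, as $u\to\infty$, $$\mathbb P\Big(\exists (t,s_1,s_2)\in A_\varepsilon:\ B_1(t)-c_1t-\gamma_1(B_1(s_1)-c_1s_1)>u,\ B_2(t)-c_2t-\gamma_2(B_2(s_2)-c_2s_2)>au\Big)=o\big(e^{-\delta u^2}\big).$$ *)

(* Defs.v *)
From HB Require Import structures.
From mathcomp Require Import all_boot all_order all_algebra.
From mathcomp Require Import all_classical all_reals all_analysis.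
From mathcomp Require Import normal_distribution.
Set Implicit Arguments. Unset Strict Implicit. Unset Printing Implicit Defensive.
Import Order.TTheory GRing.Theory Num.Theory.
Import numFieldNormedType.Exports.
Local Open Scope classical_set_scope.
Local Open Scope ring_scope.

Definition mutually_indep {R : realType} {d : measure_display}
  {T : measurableType d} (P : probability T R) (I : finType)
  (X : I -> T -> R) : Prop :=
  forall A : I -> set R, (forall i, measurable (A i)) ->
    P [set w | forall i, A i (X i w)] = (\prod_(i : I) P (X i @^-1` A i))%E.

(* (B1, B2) is a pair of independent standard Brownian motions on [0, +oo):
   each B_b(t) is a random variable, B_b(0) = 0, paths are continuous on
   [0, +oo), and for all times 0 = t_0 < t_1 < ... < t_n the 2n increments
   B_b(t_{k+1}) - B_b(t_k) (k < n, b = 1,2) are mutually independent,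
   with B_b(t_{k+1}) - B_b(t_k) ~ N(0, t_{k+1} - t_k). *)
Definition indep_std_BM_pair {R : realType} {d : measure_display}
  {T : measurableType d} (P : probability T R) (B1 B2 : R -> T -> R) : Prop :=
  let B := fun (b : bool) => if b then B2 else B1 in
  [/\ (forall b t, measurable_fun setT (B b t)),
      (forall b w, B b 0 w = 0),
      (forall b w, {within `[0, +oo[, continuous (fun t => B b t w)}) &
      (forall (n : nat) (t : nat -> R), t 0%N = 0 ->
         (forall k, (k < n)%N -> t k < t k.+1) ->
         let Y := fun (kb : 'I_n * bool) =>
           fun w => B kb.2 (t kb.1.+1) w - B kb.2 (t kb.1) w in
         mutually_indep P Y /\
         (forall kb A, measurable A ->
            P (Y kb @^-1` A) =
            normal_prob 0 (Num.sqrt (t kb.1.+1 - t kb.1)) A))].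

(* Main.v *)
Require Import Defs.
From HB Require Import structures.
From mathcomp Require Import all_boot all_order all_algebra.
From mathcomp Require Import all_classical all_reals all_analysis.
From mathcomp Require Import normal_distribution measurable_realfun.
From mathcomp Require Import ring lra zify.
Import Order.TTheory GRing.Theory Num.Theory.
Import numFieldNormedType.Exports.
Local Open Scope classical_set_scope.
Local Open Scope ring_scope.
Lemma peak2 (R : realType) (s : R) : (0 < s)%R -> normal_peak s = (2 * normal_peak (2 * s))%R.
Proof.
move=> s0; rewrite /normal_peak.
have -> : ((2 * s) ^+ 2 * pi *+ 2 = 2 ^+ 2 * (s ^+ 2 * pi *+ 2) :> R)%R.
  by ring.
rewrite sqrtrM ?exprn_ge0 // sqrtr_sqr ger0_norm //.
rewrite invfM mulrA divff ?mul1r //.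
Qed.
Lemma mA (R : realType) (y : R) : measurable [set z : R | y < `|z|]%R.
Proof.
have := @normr_measurable R setT measurableT `]y, +oo[%classic (measurable_itv _).
by rewrite setTI; congr measurable; apply/seteqP; split => z /=; rewrite in_itv /= andbT.
Qed.

Lemma sqr_lt_norm (R : realType) (x y : R) : 0 <= y -> y < `|x| -> y ^+ 2 <= x ^+ 2.
Proof. move=> y0 yx; rewrite -[x ^+ 2](real_normK (num_real x)); have := normr_ge0 x; nra. Qed.

Local Open Scope ereal_scope.
Lemma normal_tail (R : realType) (s y : R) : (0 < s)%R -> (0 <= y)%R ->
  normal_prob 0 s [set z | y < `|z|]%R <= (2 * expR (- (y ^+ 2 / (4 * s ^+ 2))))%:E.
Proof.
move=> s0 y0; rewrite /normal_prob.
set c := (2 * expR _)%R.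
have c0 : (0 <= c)%R by rewrite mulr_ge0 ?expR_ge0.
apply: (@le_trans _ _ (\int[lebesgue_measure]_(x in [set z | y < `|z|]%R)
          (c%:E * (normal_pdf 0 (2 * s) x)%:E))).
  apply: ge0_le_integral; [exact: mA| | | |].
  - by move=> x _; rewrite lee_fin normal_pdf_ge0.
  - apply/measurable_funTS/measurable_EFinP; exact: measurable_normal_pdf.
  - apply/measurable_funTS/measurable_EFinP/measurable_funM => //.
    exact: measurable_normal_pdf.
  move=> x /= yx; rewrite -EFinM lee_fin.
  have s20 : (2 * s != 0)%R by rewrite mulf_neq0 ?gt_eqF.
  rewrite /normal_pdf (negbTE s20) gt_eqF //.
  rewrite peak2 // /c /normal_fun !subr0.
  rewrite -!mulrA ler_pM2l // mulrCA ler_pM2l ?normal_peak_gt0 //.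
  rewrite -expRD ler_expR.
  have xy : (y ^+ 2 <= x ^+ 2)%R.
    exact: sqr_lt_norm.
  have sp : (0 < s ^+ 2)%R by rewrite exprn_gt0.
  have -> : (- x ^+ 2 / (s ^+ 2 *+ 2) = - (y ^+ 2 / (4 * s ^+ 2)) + - x ^+ 2 / ((2 * s) ^+ 2 *+ 2)
      - (3 * x ^+ 2 - 2 * y ^+ 2) / (8 * s ^+ 2))%R.
    by field; rewrite gt_eqF.
  rewrite [in leRHS]mulrA -expr2 gerBl divr_ge0 //; last by rewrite mulr_ge0 // ltW.
  have := le_trans (sqr_ge0 y) xy; lra.
rewrite ge0_integralZl //; last 3 first.
- exact: mA.
- apply/measurable_funTS/measurable_EFinP; exact: measurable_normal_pdf.
- by move=> x _; rewrite lee_fin normal_pdf_ge0.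
rewrite -[leRHS]mule1 lee_wpmul2l ?lee_fin //.
rewrite -(integral_normal_pdf 0 (2 * s)).
apply: ge0_subset_integral => //.
- exact: mA.
- apply/measurable_EFinP; exact: measurable_normal_pdf.
- by move=> x _; rewrite lee_fin normal_pdf_ge0.
Qed.

Lemma incr_tail (R : realType) (d : measure_display) (T : measurableType d)
  (P : probability T R) (B1 B2 : R -> T -> R) (hB : indep_std_BM_pair P B1 B2)
  (b : bool) (r s y : R) : (0 <= r)%R -> (r < s)%R -> (0 <= y)%R ->
  P [set w | y < `|(if b then B2 else B1) s w - (if b then B2 else B1) r w|]%R
  <= (2 * expR (- (y ^+ 2 / (4 * (s - r)))))%:E.
Proof.
move=> r0 rs y0; case: hB => _ _ _ H.
have sr0 : (0 < s - r)%R by rewrite subr_gt0.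
suff Hn : P [set w | y < `|(if b then B2 else B1) s w - (if b then B2 else B1) r w|]%R =
     normal_prob 0 (Num.sqrt (s - r)) [set z | y < `|z|]%R.
  rewrite Hn; apply: (le_trans (@normal_tail R (Num.sqrt (s - r)) y _ y0)).
    by rewrite sqrtr_gt0.
  by rewrite sqr_sqrtr // ltW.
case: (eqVneq r 0%R) => [r00|r0'].
  subst r.
  have := H 1%N (fun k => if k == 0%N then 0%R else s) erefl.
  case=> [k|]; first by case: k => //= _; move: sr0; rewrite subr0.
  move=> _ /(_ (ord0, b) _ (@mA R y)) /=.
  by rewrite /preimage /=; case: b.
have rp : (0 < r)%R by rewrite lt0r r0' r0.
have := H 2%N (fun k => if k == 0%N then 0%R else if k == 1%N then r else s) erefl.
case=> [k|]; first by case: k => [|[|]] //=.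
move=> _ /(_ (@Ordinal 2 1 isT, b) _ (@mA R y)) /=.
by rewrite /preimage /=; case: b.
Qed.
Local Close Scope ereal_scope.

Definition dp {R : realType} (eps : R) (n k : nat) : R := eps * k%:R / 2 ^+ n.

Lemma dp0 (R : realType) (eps : R) n : dp eps n 0 = 0.
Proof. by rewrite /dp mulr0 mul0r. Qed.

Lemma dp_double (R : realType) (eps : R) n j : dp eps n.+1 (j.*2) = dp eps n j.
Proof.
rewrite /dp -muln2 natrM exprS; field.
by rewrite expf_neq0 // pnatr_eq0.
Qed.

Lemma chain_grid (R : realType) (f : R -> R) (eps x : R) : f 0 = 0 -> 0 <= x ->
  (forall n k, (k < 2 ^ n)%N -> `|f (dp eps n k.+1) - f (dp eps n k)| <= x * (3/4) ^+ n / 4) ->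
  forall n k, (k <= 2 ^ n)%N -> `|f (dp eps n k)| <= x * (1 - (3/4) ^+ n.+1).
Proof.
move=> f0 x0 H; elim=> [|n IH] k.
  rewrite expn0; case: k => [|[|//]] _.
    by rewrite dp0 f0 normr0 mulr_ge0 // subr_ge0 expr1; lra.
  have := H 0%N 0%N isT; rewrite dp0 f0 subr0 expr0 expr1 mulr1.
  by move/le_trans; apply; lra.
move=> kn.
have hk := odd_double_half k.
have j2 : (k./2 <= 2 ^ n)%N by rewrite leq_half_double; move: kn; rewrite expnS; lia.
have e34 : (3 / 4) ^+ n.+2 <= (3 / 4) ^+ n.+1 :> R.
  have : 0 <= (3/4) ^+ n.+1 :> R by rewrite exprn_ge0 //; lra.
  move=> h; rewrite [in leLHS]exprS; lra.
case: (odd k) hk => /= hk.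
  have jn : (k./2 < 2 ^ n)%N by move: kn; rewrite expnS; lia.
  move: hk; rewrite add1n => hk; rewrite -hk.
  have := H n.+1 (k./2.*2); rewrite dp_double.
  move=> /(_ _) Hk.
  have {}Hk := Hk ltac:(rewrite expnS -hk in kn *; lia).
  have := IH _ j2.
  have := ler_normD (f (dp eps n.+1 (k./2.*2).+1) - f (dp eps n k./2)) (f (dp eps n k./2)).
  rewrite subrK => h1 h2.
  apply: (le_trans h1); apply: le_trans (lerD Hk h2) _.
  rewrite [X in _ <= x * (1 - X)]exprS.
  have : 0 <= (3/4) ^+ n.+1 :> R by rewrite exprn_ge0 //; lra.
  nra.
rewrite add0n in hk; rewrite -hk dp_double.
apply: le_trans (IH _ j2) _.
by rewrite ler_wpM2l // lerB.
Qed.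
Lemma cont_ed (R : realType) (f : R -> R) x : {within `[0,+oo[, continuous f} -> 0 <= x ->
  forall e, 0 < e -> exists2 d, 0 < d & forall y, 0 <= y -> `|y - x| < d -> `|f y - f x| < e.
Proof.
move=> cf x0 e e0.
have := (proj1 (subspace_continuousP _ _) cf x).
rewrite /= in_itv /= andbT x0 => /(_ isT) /cvgrPdist_lt /(_ e e0).
rewrite near_withinE => /nbhs_ballP [d d0 H]; exists d => // y y0 yx.
have := H y; rewrite /ball /= distrC => /(_ yx); rewrite in_itv/= andbT y0 distrC.
by apply.
Qed.

Lemma small_dyadic (R : realType) (eps rho : R) : 0 < rho -> exists n, eps / 2 ^+ n < rho.
Proof.
move=> r0; exists (Num.Def.trunc (eps / rho)).+1.
set n := (Num.Def.trunc (eps / rho)).+1.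
have h1 := truncnS_gt (eps / rho).
have h2 : (n%:R : R) <= 2 ^+ n.
  by rewrite -natrX ler_nat; apply: ltnW; apply: ltn_expl.
have p2 : (0 : R) < 2 ^+ n by rewrite exprn_gt0.
rewrite ltr_pdivrMr //.
have : eps / rho < 2 ^+ n by apply: lt_le_trans h1 h2.
by rewrite ltr_pdivrMr // mulrC.
Qed.

Lemma chain_all (R : realType) (f : R -> R) (eps x : R) : 0 < eps ->
  {within `[0, +oo[, continuous f} ->
  (forall n k, (k <= 2 ^ n)%N -> `|f (dp eps n k)| <= x) ->
  forall t, 0 <= t <= eps -> `|f t| <= x.
Proof.
move=> e0 cf H t /andP[t0 te].
rewrite leNgt; apply/negP => lt.
have [d d0 Hd] := @cont_ed R f t cf t0 (`|f t| - x) ltac:(by rewrite subr_gt0).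
have [n hn] := @small_dyadic R eps d d0.
have p2 : (0 : R) < 2 ^+ n by rewrite exprn_gt0.
have y0 : 0 <= t * 2 ^+ n / eps by rewrite divr_ge0 ?mulr_ge0 // ltW.
have /andP[k1 k2] := trunc_itv y0.
set k := Num.Def.trunc _ in k1 k2.
have kn : (k <= 2 ^ n)%N.
  rewrite -(ler_nat R) natrX; apply: le_trans k1 _.
  by rewrite ler_pdivrMr // mulrC ler_wpM2l // ltW.
have dk0 : 0 <= dp eps n k by rewrite /dp divr_ge0 ?mulr_ge0 // ltW.
have dkt : dp eps n k <= t.
  by rewrite /dp ler_pdivrMr // mulrC -ler_pdivlMr.
have tdk : t - dp eps n k < eps / 2 ^+ n.
  have -> : (t - dp eps n k) = (t * 2 ^+ n - k%:R * eps) / 2 ^+ n.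
    by rewrite /dp; field; rewrite gt_eqF.
  rewrite ltr_pM2r ?invr_gt0 // ltrBlDl.
  by move: k2; rewrite ltr_pdivrMr // -[k.+1%:R]natr1 mulrDl mul1r.
have := Hd _ dk0; rewrite distrC ger0_norm ?subr_ge0 // => /(_ (lt_trans tdk hn)).
have := H n k kn.
have := ler_normD (f t - f (dp eps n k)) (f (dp eps n k)); rewrite subrK.
rewrite distrC; lra.
Qed.
Lemma bern98 (R : realType) (n : nat) : 1 + n%:R / 8 <= (9/8 : R) ^+ n.
Proof.
elim: n => [|n IH]; first by rewrite expr0 mul0r addr0.
rewrite exprS -natr1.
have : (1 : R) <= (9/8) ^+ n by apply: le_trans IH; rewrite lerDl divr_ge0.
move: IH; set a := (9/8 : R) ^+ n; nra.
Qed.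

Lemma level_bound (R : realType) (A : R) (n : nat) : 4 <= expR (A / 8) -> 0 <= A ->
  2 ^+ n * (2 * expR (- (A * (9/8) ^+ n))) <= 2 * expR (- A) * (1/2) ^+ n.
Proof.
move=> hE A0.
set E := expR (A / 8).
have E0 : 0 < E by rewrite expR_gt0.
have h1 : expR (- (A * (9/8) ^+ n)) <= expR (- A) / E ^+ n.
  rewrite /E -expRM_natl -expRN -expRD ler_expR.
  have := bern98 R n; nra.
apply: le_trans (ler_wpM2l _ (ler_wpM2l _ h1)) _; rewrite ?exprn_ge0 //.
have -> : 2 ^+ n * (2 * (expR (- A) / E ^+ n)) = 2 * expR (- A) * ((2 / E) ^+ n).
  by rewrite exprMn exprVn; field; rewrite expf_neq0 // gt_eqF.
rewrite ler_pM2l ?mulr_gt0 ?expR_gt0 //.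
apply: lerXn2r; rewrite ?nnegrE.
- by rewrite divr_ge0 // ltW.
- by [].
rewrite ler_pdivrMr // mulrC mulrA mulr1 ler_pdivlMr // /E; lra.
Qed.

Lemma geom_sum (R : realType) (c : R) (N : nat) : 0 <= c ->
  \sum_(n < N) c * (1/2) ^+ n <= 2 * c.
Proof.
move=> c0.
have : \sum_(n < N) c * (1/2) ^+ n = 2 * c - 2 * c * (1/2) ^+ N.
  elim: N => [|N IH]; first by rewrite big_ord0 expr0; ring.
  by rewrite big_ord_recr /= IH exprS; field.
move=> ->; rewrite gerBl mulr_ge0 ?exprn_ge0 //; lra.
Qed.

Local Open Scope ereal_scope.
Lemma eseries_geom (R : realType) (u : nat -> \bar R) (c : R) : (0 <= c)%R ->
  (forall n, 0 <= u n) -> (forall n, u n <= (c * (1/2) ^+ n)%:E) ->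
  \sum_(n <oo) u n <= (2 * c)%:E.
Proof.
move=> c0 u0 hu; apply: lime_le; first exact: is_cvg_nneseries.
apply: nearW => N.
apply: le_trans (_ : \sum_(0 <= n < N) (c * (1/2) ^+ n)%:E <= _).
  by apply: lee_sum => i _.
rewrite sumEFin lee_fin big_mkord; exact: geom_sum.
Qed.
Local Close Scope ereal_scope.

Lemma dyadic_approx (R : realType) (eps t : R) (n : nat) : 0 < eps -> 0 <= t -> t <= eps ->
  let k := Num.Def.trunc (t * 2 ^+ n / eps) in
  [/\ (k <= 2 ^ n)%N, 0 <= dp eps n k, dp eps n k <= t & t - dp eps n k < eps / 2 ^+ n].
Proof.
move=> e0 t0 te k.
have p2 : (0 : R) < 2 ^+ n by rewrite exprn_gt0.
have y0 : 0 <= t * 2 ^+ n / eps by rewrite divr_ge0 ?mulr_ge0 // ltW.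
have /andP[k1 k2] := trunc_itv y0.
split.
- rewrite -(ler_nat R) natrX; apply: le_trans k1 _.
  by rewrite ler_pdivrMr // mulrC ler_wpM2l // ltW.
- by rewrite /dp divr_ge0 ?mulr_ge0 // ltW.
- by rewrite /dp ler_pdivrMr // mulrC -ler_pdivlMr.
have -> : (t - dp eps n k) = (t * 2 ^+ n - k%:R * eps) / 2 ^+ n.
  by rewrite /dp; field; rewrite gt_eqF.
rewrite ltr_pM2r ?invr_gt0 // ltrBlDl.
by move: k2; rewrite ltr_pdivrMr // -[k.+1%:R]natr1 mulrDl mul1r.
Qed.

Lemma trunc_mono (R : realType) (x y : R) : 0 <= x -> x <= y ->
  (Num.Def.trunc x <= Num.Def.trunc y)%N.
Proof.
move=> x0 xy; rewrite truncn_ge_nat ?(le_trans x0) //.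
by have /andP[h _] := trunc_itv x0; apply: le_trans h xy.
Qed.

Lemma dp_mono (R : realType) (eps : R) n k1 k2 : 0 <= eps -> (k1 <= k2)%N -> dp eps n k1 <= dp eps n k2.
Proof.
move=> e0 k12; rewrite /dp ler_pM2r ?invr_gt0 ?exprn_gt0 //.
by rewrite ler_wpM2l // ler_nat.
Qed.

Lemma dp_le (R : realType) (eps : R) n k : 0 <= eps -> (k <= 2 ^ n)%N -> dp eps n k <= eps.
Proof.
move=> e0 kn; have p2 : (0 : R) < 2 ^+ n by rewrite exprn_gt0.
rewrite /dp ler_pdivrMr // ler_wpM2l //.
by rewrite -natrX ler_nat.
Qed.

Lemma phi_close (R : realType) (e g p q r s : R) : 0 <= g <= 2 ->
  `|p| < e -> `|q| < e -> `|r| < e -> `|s| < e -> `|p - q - g * (r - s)| <= 6 * e.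
Proof.
move=> /andP[g0 g2]; rewrite !ltr_norml => /andP[p1 p2] /andP[q1 q2] /andP[r1 r2] /andP[s1 s2].
rewrite ler_norml; apply/andP; split; nra.
Qed.

Lemma meas_gt d (T : measurableType d) (R : realType) (f : T -> R) (u : R) :
  measurable_fun setT f -> measurable [set w | u < f w].
Proof.
move=> mf; have := mf measurableT `]u, +oo[%classic (measurable_itv _).
by rewrite setTI; congr measurable; apply/seteqP; split => z /=; rewrite in_itv /= andbT.
Qed.

Lemma lin_small (R : realType) (c D z e : R) : 0 < e -> 0 <= z -> z < e / D -> `|c| + 1 <= D ->
  `|c * z| < e.
Proof.
move=> e0 z0 zD cD.
have D0 : 0 < D by have := normr_ge0 c; lra.
rewrite normrM (ger0_norm z0); move: zD; rewrite ltr_pdivlMr // => h.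
have := normr_ge0 c; nra.
Qed.

Lemma bad_meas d (T : measurableType d) (R : realType) (B1 B2 : R -> T -> R)
  (m1 : forall t, measurable_fun setT (B1 t)) (m2 : forall t, measurable_fun setT (B2 t))
  (k1 : forall w, {within `[0, +oo[, continuous (fun t => B1 t w)})
  (k2 : forall w, {within `[0, +oo[, continuous (fun t => B2 t w)})
  (c1 c2 g1 g2 a u eps : R) : 0 < eps -> eps < 1 -> 0 <= g1 <= 2 -> 0 <= g2 <= 2 ->
  measurable [set w | (exists t s1 s2 : R,
           [/\ 0 <= t <= 1, 0 <= s1 <= 1, 0 <= s2 <= 1,
               Num.max s1 s2 <= t & t <= eps] /\
           B1 t w - c1 * t - g1 * (B1 s1 w - c1 * s1) > u /\
           B2 t w - c2 * t - g2 * (B2 s2 w - c2 * s2) > a * u)].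
Proof.
move=> e0 e1 hg1 hg2.
set G := fun n k0 k1 k2 => if [&& (k1 <= k0)%N, (k2 <= k0)%N & (k0 <= 2 ^ n)%N] then
  [set w | u < B1 (dp eps n k0) w - c1 * dp eps n k0 - g1 * (B1 (dp eps n k1) w - c1 * dp eps n k1)]
  `&` [set w | a * u < B2 (dp eps n k0) w - c2 * dp eps n k0 - g2 * (B2 (dp eps n k2) w - c2 * dp eps n k2)]
  else set0.
have mphi : forall (B : R -> T -> R) (c g t s : R), (forall t, measurable_fun setT (B t)) ->
    measurable_fun setT (fun w => B t w - c * t - g * (B s w - c * s)).
  move=> B c g t s mB.
  apply: measurable_funB; first by apply: measurable_funB => //; exact: measurable_cst.
  apply: measurable_funM; first exact: measurable_cst.
  by apply: measurable_funB => //; exact: measurable_cst.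
suff -> : [set w | (exists t s1 s2 : R,
           [/\ 0 <= t <= 1, 0 <= s1 <= 1, 0 <= s2 <= 1,
               Num.max s1 s2 <= t & t <= eps] /\
           B1 t w - c1 * t - g1 * (B1 s1 w - c1 * s1) > u /\
           B2 t w - c2 * t - g2 * (B2 s2 w - c2 * s2) > a * u)] =
  \bigcup_n \bigcup_k0 \bigcup_k1 \bigcup_k2 G n k0 k1 k2.
  apply: bigcupT_measurable => n; apply: bigcupT_measurable => i0.
  apply: bigcupT_measurable => i1; apply: bigcupT_measurable => i2.
  rewrite /G; case: ifP => _ //.
  by apply: measurableI; apply: meas_gt; apply: mphi.
apply/seteqP; split; last first.
  move=> w [n _ [i0 _ [i1 _ [i2 _]]]]; rewrite /G.
  case: ifP => // /and3P[h10 h20 h0n] [h1 h2].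
  exists (dp eps n i0), (dp eps n i1), (dp eps n i2); split; last by split.
  have z0 : forall i, 0 <= dp eps n i by move=> i; rewrite /dp divr_ge0 ?mulr_ge0 ?exprn_ge0 // ltW.
  have l1 : forall i, (i <= 2 ^ n)%N -> dp eps n i <= 1.
    by move=> i hi; apply: le_trans (@dp_le R eps n i (ltW e0) hi) (ltW e1).
  have i10 := leq_trans h10 h0n; have i20 := leq_trans h20 h0n.
  rewrite !z0 !l1 // ge_max !(@dp_mono R eps n) ?(ltW e0) //; split => //.
  exact: (@dp_le R eps n i0 (ltW e0) h0n).
move=> w [t [s1 [s2 [[/andP[t0 t1] /andP[s10 s11] /andP[s20 s21] hmax te] [h1 h2]]]]].
move: hmax; rewrite ge_max => /andP[st1 st2].
set M1 := B1 t w - c1 * t - g1 * (B1 s1 w - c1 * s1) - u.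
set M2 := B2 t w - c2 * t - g2 * (B2 s2 w - c2 * s2) - a * u.
have M10 : 0 < M1 by rewrite /M1 subr_gt0.
have M20 : 0 < M2 by rewrite /M2 subr_gt0.
set e := Num.min M1 M2 / 8.
have e0' : 0 < e by rewrite /e divr_gt0 // lt_min M10 M20.
have eM1 : 8 * e <= M1 by rewrite /e mulrC divfK ?ge_min ?lexx.
have eM2 : 8 * e <= M2 by rewrite /e mulrC divfK ?ge_min ?lexx ?orbT.
have [da da0 Ha] := @cont_ed R (fun t => B1 t w) t (k1 w) t0 e e0'.
have [db db0 Hb] := @cont_ed R (fun t => B1 t w) s1 (k1 w) s10 e e0'.
have [dc dc0 Hc] := @cont_ed R (fun t => B2 t w) t (k2 w) t0 e e0'.
have [dd dd0 Hd] := @cont_ed R (fun t => B2 t w) s2 (k2 w) s20 e e0'.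
set D := `|c1| + `|c2| + 1.
have D0 : 0 < D by rewrite /D; have := normr_ge0 c1; have := normr_ge0 c2; lra.
set rho := Num.min (Num.min (Num.min da db) (Num.min dc dd)) (e / D).
have rho0 : 0 < rho by rewrite /rho !lt_min da0 db0 dc0 dd0 divr_gt0.
have [n hn] := @small_dyadic R eps rho rho0.
have p2 : (0 : R) < 2 ^+ n by rewrite exprn_gt0.
have hr : forall z, z < rho -> [/\ z < da, z < db, z < dc, z < dd & z < e / D].
  by move=> z; rewrite /rho !lt_min => /andP[/andP[/andP[-> ->] /andP[-> ->]] ->].
have [K0n K00 K0t K0d] := @dyadic_approx R eps t n e0 t0 te.
have [K1n K10 K1t K1d] := @dyadic_approx R eps s1 n e0 s10 (le_trans st1 te).
have [K2n K20 K2t K2d] := @dyadic_approx R eps s2 n e0 s20 (le_trans st2 te).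
set K0 := Num.Def.trunc (t * 2 ^+ n / eps) in K0n K00 K0t K0d.
set K1 := Num.Def.trunc (s1 * 2 ^+ n / eps) in K1n K10 K1t K1d.
set K2 := Num.Def.trunc (s2 * 2 ^+ n / eps) in K2n K20 K2t K2d.
have mono : forall s, 0 <= s -> s <= t -> (Num.Def.trunc (s * 2 ^+ n / eps) <= K0)%N.
  move=> s s0 st; apply: (@trunc_mono R); first by rewrite divr_ge0 ?mulr_ge0 // ltW.
  by rewrite ler_pM2r ?invr_gt0 // ler_pM2r.
exists n => //; exists K0 => //; exists K1 => //; exists K2 => //.
rewrite /G (mono _ s10 st1) (mono _ s20 st2) K0n /=.
have close : forall (s y : R), 0 <= y -> y <= s -> s - y < eps / 2 ^+ n -> `|y - s| < rho.
  move=> s y y0 ys h; rewrite distrC ger0_norm ?subr_ge0 //; exact: lt_trans h hn.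
have cl0 := close _ _ K00 K0t K0d.
have cl1 := close _ _ K10 K1t K1d.
have cl2 := close _ _ K20 K2t K2d.
have [a0 _ c0 _ r0] := hr _ cl0.
have [_ b1 _ _ r1] := hr _ cl1.
have [_ _ _ d2 r2] := hr _ cl2.
have lin : forall (c z : R), `|c| + 1 <= D -> `|z| < e / D -> `|c * z| < e.
  move=> c z cD hz; have := @lin_small R c D `|z| e e0' (normr_ge0 z) hz cD.
  by rewrite !normrM normr_id.
have cD1 : `|c1| + 1 <= D by rewrite /D; have := normr_ge0 c2; lra.
have cD2 : `|c2| + 1 <= D by rewrite /D; have := normr_ge0 c1; lra.
split => /=.
  have := @phi_close R e g1 _ _ _ _ hg1 (Ha _ K00 a0) (lin c1 _ cD1 r0) (Hb _ K10 b1) (lin c1 _ cD1 r1).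
  set Z := (X in `|X| <= _) => hZ.
  have -> : B1 (dp eps n K0) w - c1 * dp eps n K0 - g1 * (B1 (dp eps n K1) w - c1 * dp eps n K1)
      = M1 + u + Z by rewrite /Z /M1; ring.
  have := ler_norml Z (6 * e); rewrite hZ => /esym/andP[hZ1 _]; lra.
have := @phi_close R e g2 _ _ _ _ hg2 (Hc _ K00 c0) (lin c2 _ cD2 r0) (Hd _ K20 d2) (lin c2 _ cD2 r2).
set Z := (X in `|X| <= _) => hZ.
have -> : B2 (dp eps n K0) w - c2 * dp eps n K0 - g2 * (B2 (dp eps n K2) w - c2 * dp eps n K2)
    = M2 + a * u + Z by rewrite /Z /M2; ring.
have := ler_norml Z (6 * e); rewrite hZ => /esym/andP[hZ1 _]; lra.
Qed.

Lemma contra_num (R : realType) (bt bs c g t s u : R) : 0 <= g <= 2 -> 0 <= s <= 1 -> 0 <= t <= 1 ->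
  `|bt| <= u / 4 -> `|bs| <= u / 4 -> 12 * `|c| <= u -> ~ (u < bt - c * t - g * (bs - c * s)).
Proof.
move=> /andP[g0 g2] /andP[s0 s1] /andP[t0 t1].
rewrite !ler_norml => /andP[bt1 bt2] /andP[bs1 bs2] cu.
have hc1 : `|c * t| <= `|c| by rewrite normrM (ger0_norm t0) ler_piMr.
have hc2 : `|c * s| <= `|c| by rewrite normrM (ger0_norm s0) ler_piMr.
move: hc1 hc2; rewrite !ler_norml => /andP[h1 h2] /andP[h3 h4].
have := normr_ge0 c.
nra.
Qed.

Lemma exp_final (R : realType) (A y eta : R) : 0 < eta -> 0 <= y -> 2 * y <= A -> 4 / eta <= y ->
  4 * expR (- A) <= eta * expR (- y).
Proof.
move=> et0 y0 hA hy.
have h1 : expR (- A) <= expR (- y) * expR (- y) by rewrite -expRD ler_expR; lra.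
have h2 : expR (- y) * (1 + y) <= 1.
  have := expR_ge1Dx y; have := expR_gt0 (- y).
  have : expR (- y) * expR y = 1 by rewrite -expRD addNr expR0.
  nra.
have h3 : 4 <= eta * (1 + y).
  by move: hy; rewrite ler_pdivrMr //; lra.
have := expR_gt0 (- y); have := expR_gt0 (- A).
nra.
Qed.

Theorem lemma3p2 (R : realType) (d : measure_display) (T : measurableType d)
  (P : probability T R) (B1 B2 : R -> T -> R)
  (hB : indep_std_BM_pair P B1 B2)
  (c1 c2 g1 g2 a : R)
  (hg1 : 0 <= g1 < 2) (hg2 : 0 <= g2 < 2) (ha : a <= 1) :
  forall delta : R, 0 < delta ->
  exists eps : R, 0 < eps < 1 /\
    forall eta : R, 0 < eta -> exists U : R, forall u : R, U < u ->
      (P [set w | (exists t s1 s2 : R,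
           [/\ 0 <= t <= 1, 0 <= s1 <= 1, 0 <= s2 <= 1,
               Num.max s1 s2 <= t & t <= eps] /\
           B1 t w - c1 * t - g1 * (B1 s1 w - c1 * s1) > u /\
           B2 t w - c2 * t - g2 * (B2 s2 w - c2 * s2) > a * u)%R]
      <= (eta * expR (- (delta * u ^+ 2)))%:E)%E.
Proof.
move=> delta dl0.
have hB' := hB; move: hB' => [hm h0 hc _].
have hg1' : 0 <= g1 <= 2 by move: hg1 => /andP[-> /ltW ->].
have hg2' : 0 <= g2 <= 2 by move: hg2 => /andP[-> /ltW ->].
set eps := 1 / (2048 * delta + 2).
have D0 : 0 < 2048 * delta + 2 by lra.
have e0 : 0 < eps by rewrite /eps divr_gt0.
have e1 : eps < 1 by rewrite /eps ltr_pdivrMr //; lra.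
have edel : 2048 * delta * eps <= 1.
  rewrite /eps mulrA mulr1 ler_pdivrMr //; lra.
clearbody eps.
exists eps; split; first by rewrite e0 e1.
move=> eta eta0.
exists (12 * `|c1| + 25 * 1024 + 4 / (eta * delta)) => u uU.
have ied : 0 <= 4 / (eta * delta) by rewrite divr_ge0 // mulr_ge0 // ltW.
have u1 : 1 <= u by have := normr_ge0 c1; lra.
have uu : u <= u ^+ 2 by rewrite expr2; nra.
have uc : 12 * `|c1| <= u by have := normr_ge0 c1; lra.
set x := u / 4.
have x0 : 0 <= x by rewrite /x divr_ge0 //; lra.
set E := fun n k => [set w | x * (3/4) ^+ n / 4 < `|B1 (dp eps n k.+1) w - B1 (dp eps n k) w|].
set F := fun n => \big[setU/set0]_(k < 2 ^ n) E n k.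
have mE : forall n k, measurable (E n k).
  move=> n k; apply: meas_gt.
  apply: measurableT_comp => //; apply: measurable_funB; [exact: (hm false)|exact: (hm false)].
have mF : forall n, measurable (F n).
  by move=> n; apply: bigsetU_measurable => k _; exact: mE.
have mBad := @bad_meas d T R B1 B2 (hm false) (hm true) (hc false) (hc true)
   c1 c2 g1 g2 a u eps e0 e1 hg1' hg2'.
apply: (le_trans (@measure_sigma_subadditive _ _ _ P _ F mF mBad _)).
  move=> w [t [s1 [s2 [[ht hs1 hs2 hmax te] [h1 h2]]]]].
  case: (pselect (exists n k, (k < 2 ^ n)%N /\ E n k w)) => [[n [k [kn hk]]]|hno].
    exists n => //; rewrite /F -bigcup_mkord; exists k => //.
  have hinc : forall n k, (k < 2 ^ n)%N ->
      `|B1 (dp eps n k.+1) w - B1 (dp eps n k) w| <= x * (3/4) ^+ n / 4.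
    move=> n k kn; rewrite leNgt; apply/negP => hk; apply: hno; exists n, k; split => //.
  have hgrid := @chain_grid R (fun t => B1 t w) eps x (h0 false w) x0 hinc.
  have hgrid' : forall n k, (k <= 2 ^ n)%N -> `|B1 (dp eps n k) w| <= x.
    move=> n k kn; apply: le_trans (hgrid n k kn) _.
    rewrite ler_piMr // lerBlDr lerDl exprn_ge0 //; lra.
  have hall := @chain_all R (fun t => B1 t w) eps x e0 (hc false w) hgrid'.
  move: hmax; rewrite ge_max => /andP[st1 st2].
  move: ht => /andP[t0 t1].
  have := @contra_num R (B1 t w) (B1 s1 w) c1 g1 t s1 u hg1' hs1 (ltac:(by rewrite t0 t1)).
  move=> /(_ (hall t ltac:(by rewrite t0 te))).
  move: hs1 => /andP[s10 _].
  by move=> /(_ (hall s1 ltac:(by rewrite s10 (le_trans st1 te)))) /(_ uc).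
set A := x ^+ 2 / (64 * eps).
have A0 : 0 <= A by rewrite /A divr_ge0 ?sqr_ge0 // mulr_ge0 // ltW.
have hA : A * (1024 * eps) = u ^+ 2 by rewrite /A /x; field; rewrite gt_eqF.
have A24 : 24 <= A.
  have h1 : 0 <= A * (1 - eps) by rewrite mulr_ge0 // subr_ge0 ltW.
  have h2 : 25 * 1024 <= u by have := normr_ge0 c1; lra.
  lra.

have hE4 : 4 <= expR (A / 8) by apply: le_trans (expR_ge1Dx _); lra.
have c0 : 0 <= 2 * expR (- A) by rewrite mulr_ge0 ?expR_ge0.
apply: le_trans (@eseries_geom R (fun n => P (F n)) (2 * expR (- A)) c0 _ _) _.
- by move=> n; exact: measure_ge0.
- move=> n.
  apply: le_trans (@content_subadditive _ R T P (F n) (E n) (2 ^ n)%N _ (mF n) _) _.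
  + by move=> k _; exact: mE.
  + by [].
  apply: le_trans (_ : \sum_(k < 2 ^ n) (2 * expR (- (A * (9/8) ^+ n)))%:E <= _)%E.
    apply: lee_sum => k _.
    have p2 : (0 : R) < 2 ^+ n by rewrite exprn_gt0.
    have dk0 : 0 <= dp eps n k by rewrite /dp divr_ge0 ?mulr_ge0 ?exprn_ge0 // ltW.
    have dd : dp eps n k.+1 - dp eps n k = eps / 2 ^+ n.
      by rewrite /dp -natr1; field; rewrite gt_eqF.
    have := @incr_tail R d T P B1 B2 hB false (dp eps n k) (dp eps n k.+1) (x * (3/4) ^+ n / 4)
      dk0 ltac:(by rewrite -subr_gt0 dd divr_gt0)
      ltac:(by rewrite divr_ge0 ?mulr_ge0 ?exprn_ge0 //; lra).
    rewrite dd.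
    have -> : (x * (3 / 4) ^+ n / 4) ^+ 2 / (4 * (eps / 2 ^+ n)) = A * (9 / 8) ^+ n.
      have -> : (9 / 8 : R) ^+ n = ((3/4) ^+ n) ^+ 2 * 2 ^+ n.
        by rewrite -exprM mulnC exprM -exprMn; congr (_ ^+ _); field.
      by rewrite /A; field; rewrite gt_eqF // expf_neq0.
    by move=> h; exact: h.
  rewrite sumEFin lee_fin sumr_const card_ord -[_ *+ (2 ^ n)%N]mulr_natl natrX.
  exact: level_bound.
rewrite lee_fin mulrA (_ : 2 * 2 = 4 :> R); last by lra.
apply: exp_final => //.
- by rewrite mulr_ge0 ?sqr_ge0 // ltW.
- rewrite -hA.
  have h1 : 0 <= A * (1 - 2048 * delta * eps) by apply: mulr_ge0; [exact: A0|rewrite subr_ge0; exact: edel].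
  lra.
- have h : 4 / (eta * delta) <= u by have := normr_ge0 c1; lra.
  have -> : 4 / eta = delta * (4 / (eta * delta)) by field; rewrite !gt_eqF.
  apply: le_trans (ler_wpM2l (ltW dl0) h) _.
  by rewrite ler_wpM2l // ltW.
Qed.
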